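(* Let $(X,\tau_1,\tau_2)$ be a bitopological space, $i,j\in\{1,2\}$, $i\neq j$, which is $(i,j)_1$-nearly paralindelöf, $(i,j)$-regular and a $j$-$P$-space. If $X$ is $(i,j)$-weakly Lindelöf, then $(X,\tau_i)$ is Lindelöf.
   Context: $(X,\tau_1,\tau_2)$ is a bitopological space and $i,j\in\{1,2\}$, $i\neq j$. For $k\in\{1,2\}$, $k\text{-}\mathrm{int}$ and $k\text{-}\mathrm{cl}$ denote interior and closure with respect to $\tau_k$; ''$k$-open'' means $\tau_k$-open. A set $A$ is $(i,j)$-regular open if $A=i\text{-}\mathrm{int}(j\text{-}\mathrm{cl}(A))$. $X$ is $(i,j)$-regular if for each $x\in X$ and each $i$-open set $U$ containing $x$ there is an $i$-open set $V$ with $x\in V\subseteq j\text{-}\mathrm{cl}(V)\subseteq U$. A family $\mathcal V$ refines $\mathcal U$ if each member of $\mathcal V$ is contained in some member of $\mathcal U$; a family is a cover of $X$ if its union is $X$. A family is $k$-locally countable if every $x\in X$ has a $k$-open neighbourhood meeting at most countably many of its members. $X$ is a $k$-$P$-space if every intersection of countably many $k$-open sets is $k$-open. $X$ is $(i,j)_1$-nearly paralindelöf if every cover of $X$ by $(i,j)$-regular open sets has a refinement which is a cover of $X$ by $i$-open sets and which is $j$-locally countable. $X$ is $(i,j)$-weakly Lindelöf if every cover $\{U_\alpha:\alpha\in\Delta\}$ of $X$ by $i$-open sets has a countable subfamily $\{U_{\alpha_n}:n\in\mathbb N\}$ with $X=j\text{-}\mathrm{cl}(\bigcup_n U_{\alpha_n})$.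 *)

(* Defs.v *)
From Stdlib Require Import Classical.

Definition set (X : Type) := X -> Prop.
Definition subset {X : Type} (A B : set X) : Prop := forall x, A x -> B x.

Record is_topology {X : Type} (t : set X -> Prop) : Prop := {
  top_full : t (fun _ => True);
  top_union : forall F : set X -> Prop, (forall U, F U -> t U) ->
                t (fun x => exists U, F U /\ U x);
  top_inter : forall U V, t U -> t V -> t (fun x => U x /\ V x) }.

Definition btop {X : Type} (t1 t2 : set X -> Prop) (k : nat) : set X -> Prop :=
  if Nat.eqb k 1 then t1 else t2.

Definition interior {X : Type} (t : set X -> Prop) (A : set X) : set X :=
  fun x => exists U, t U /\ U x /\ subset U A.
Definition closure {X : Type} (t : set X -> Prop) (A : set X) : set X :=
  fun x => forall U, t U -> U x -> exists y, U y /\ A y.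

Definition ij_regular_open {X : Type} (ti tj : set X -> Prop) (A : set X) : Prop :=
  forall x, A x <-> interior ti (closure tj A) x.

Definition ij_regular {X : Type} (ti tj : set X -> Prop) : Prop :=
  forall x U, ti U -> U x ->
    exists V, ti V /\ V x /\ subset (closure tj V) U.

Definition cover {X : Type} (F : set X -> Prop) : Prop :=
  forall x, exists U, F U /\ U x.
Definition refines {X : Type} (V U : set X -> Prop) : Prop :=
  forall A, V A -> exists B, U B /\ subset A B.
Definition countable_family {X : Type} (G : set X -> Prop) : Prop :=
  exists f : nat -> set X, forall U, G U -> exists n, f n = U.
Definition subfamily {X : Type} (G F : set X -> Prop) : Prop :=
  forall U, G U -> F U.

Definition locally_countable {X : Type} (tk : set X -> Prop) (F : set X -> Prop) : Prop :=
  forall x, exists W, tk W /\ W x /\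
    countable_family (fun V => F V /\ exists y, V y /\ W y).

Definition P_space {X : Type} (tk : set X -> Prop) : Prop :=
  forall u : nat -> set X, (forall n, tk (u n)) -> tk (fun x => forall n, u n x).

Definition ij1_nearly_paralindelof {X : Type} (ti tj : set X -> Prop) : Prop :=
  forall U : set X -> Prop, (forall A, U A -> ij_regular_open ti tj A) -> cover U ->
    exists V : set X -> Prop, refines V U /\ cover V /\
      (forall A, V A -> ti A) /\ locally_countable tj V.

Definition ij_weakly_lindelof {X : Type} (ti tj : set X -> Prop) : Prop :=
  forall U : set X -> Prop, (forall A, U A -> ti A) -> cover U ->
    exists G, subfamily G U /\ countable_family G /\
      forall x, closure tj (fun y => exists A, G A /\ A y) x.

Definition lindelof {X : Type} (t : set X -> Prop) : Prop :=
  forall U : set X -> Prop, (forall A, U A -> t A) -> cover U ->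
    exists G, subfamily G U /\ countable_family G /\ cover G.

(* Main.v *)
Require Import Defs.
From Stdlib Require Import Classical ClassicalEpsilon FunctionalExtensionality PropExtensionality.

Lemma btop_top (X : Type) (t1 t2 : set X -> Prop) k :
  is_topology t1 -> is_topology t2 -> is_topology (btop t1 t2 k).
Proof. intros; unfold btop; destruct (Nat.eqb k 1); assumption. Qed.

Lemma cl_sub {X : Type} (t : set X -> Prop) (A : set X) x : A x -> closure t A x.
Proof. intros Ax U _ Ux; exists x; auto. Qed.

Lemma compl_cl_open {X : Type} (t : set X -> Prop) (A : set X) :
  is_topology t -> t (fun x => ~ closure t A x).
Proof.
  intros Ht.
  assert (E : (fun x => ~ closure t A x) =
     (fun x => exists W, (fun W => t W /\ forall y, W y -> ~ A y) W /\ W x)).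
  { apply functional_extensionality; intro x; apply propositional_extensionality; split.
    - intro Hn. unfold closure in Hn.
      apply not_all_ex_not in Hn as [U HU].
      apply imply_to_and in HU as [tU HU]. apply imply_to_and in HU as [Ux HU].
      exists U; split; [split|]; auto. intros y Uy Ay; apply HU; eauto.
    - intros [W [[tW HW] Wx]] Hc. destruct (Hc W tW Wx) as [y [Wy Ay]].
      exact (HW y Wy Ay). }
  rewrite E. apply (top_union _ Ht). intros U [? ?]; auto.
Qed.

Theorem mainTheorem7 (X : Type) (t1 t2 : set X -> Prop)
  (H1 : is_topology t1) (H2 : is_topology t2)
  (i j : nat) (hi : i = 1 \/ i = 2) (hj : j = 1 \/ j = 2) (hij : i <> j) :
  ij1_nearly_paralindelof (btop t1 t2 i) (btop t1 t2 j) ->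
  ij_regular (btop t1 t2 i) (btop t1 t2 j) ->
  P_space (btop t1 t2 j) ->
  ij_weakly_lindelof (btop t1 t2 i) (btop t1 t2 j) ->
  lindelof (btop t1 t2 i).
Proof.
  intros _ Hreg HP HwL U HUo HUc.
  set (ti := btop t1 t2 i) in *. set (tj := btop t1 t2 j) in *.
  assert (Htj : is_topology tj) by (apply btop_top; auto).
  set (V' := fun V => ti V /\ exists B, U B /\ subset (closure tj V) B).
  destruct (HwL V') as [G [HGs [[f Hf] HGd]]].
  { intros A [? ?]; auto. }
  { intro x. destruct (HUc x) as [B [UB Bx]].
    destruct (Hreg x B (HUo B UB) Bx) as [V [tV [Vx HV]]].
    exists V; split; [split; [auto| exists B; auto] | auto]. }
  assert (Hex : forall n, exists B, G (f n) -> U B /\ subset (closure tj (f n)) B).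
  { intro n. destruct (classic (G (f n))) as [g|g].
    - destruct (HGs _ g) as [_ [B HB]]. exists B; auto.
    - exists (f n); tauto. }
  set (g := fun n => proj1_sig (constructive_indefinite_description _ (Hex n))).
  assert (Hg : forall n, G (f n) -> U (g n) /\ subset (closure tj (f n)) (g n)).
  { intro n; unfold g; destruct (constructive_indefinite_description _ (Hex n)); auto. }
  set (u := fun n x => G (f n) -> ~ closure tj (f n) x).
  assert (Hu : forall n, tj (u n)).
  { intro n. destruct (classic (G (f n))) as [gn|gn].
    - replace (u n) with (fun x => ~ closure tj (f n) x).
      + apply compl_cl_open; auto.
      + apply functional_extensionality; intro x; apply propositional_extensionality;
          unfold u; tauto.
    - replace (u n) with (fun _ : X => True).
      + apply top_full; auto.
      + apply functional_extensionality; intro x; apply propositional_extensionality;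
          unfold u; tauto. }
  pose proof (HP u Hu) as HO.
  exists (fun B => exists n, G (f n) /\ B = g n).
  split; [| split].
  - intros B [n [gn ->]]. apply Hg; auto.
  - exists g. intros B [n [_ ->]]. eauto.
  - intro x.
    assert (Hx : exists n, G (f n) /\ closure tj (f n) x).
    { apply NNPP; intro Hn.
      assert (Ox : forall n, u n x).
      { intros n gn c. apply Hn; eauto. }
      destruct (HGd x _ HO Ox) as [y [Oy [A [GA Ay]]]].
      destruct (Hf A GA) as [n <-].
      exact (Oy n GA (cl_sub _ _ _ Ay)). }
    destruct Hx as [n [gn c]].
    exists (g n). split; [eauto | apply (Hg n gn); auto].
Qed.
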